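(* Let $m$ and $k$ be positive integers such that $m\ge k+3$ and $2m-1<R(m-k,3)$. Suppose that $F_v(2_r;r-k+1)\ge r+m$ for every integer $r\ge m-1$. Then $F_v(2_r;r-k+1)=r+m$ for every integer $r\ge m-1$.
   Context: All graphs are finite, simple and undirected. $\mathrm{cl}(G)$ is the clique number of $G$. $G\overset{v}{\to}(2_r)$ means that in every partition of $V(G)$ into $r$ pairwise disjoint parts some part contains an edge (equivalently $\chi(G)\ge r+1$). $H_v(2_r;q)$ is the set of graphs $G$ with $G\overset{v}{\to}(2_r)$ and $\mathrm{cl}(G)<q$; $F_v(2_r;q)=\min\{|V(G)|:G\in H_v(2_r;q)\}$. The Ramsey number $R(p,3)$ is the least $n$ such that every graph on at least $n$ vertices has a $p$-clique or an independent set of size $3$. *)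

(* Defs.v *)
From mathcomp Require Import all_boot.
Set Implicit Arguments. Unset Strict Implicit. Unset Printing Implicit Defensive.

Definition simple_graph (n : nat) (e : rel 'I_n) : Prop :=
  irreflexive e /\ symmetric e.

Definition is_clique (n : nat) (e : rel 'I_n) (S : {set 'I_n}) : Prop :=
  forall x y, x \in S -> y \in S -> x != y -> e x y.

Definition is_indep (n : nat) (e : rel 'I_n) (S : {set 'I_n}) : Prop :=
  forall x y, x \in S -> y \in S -> ~~ e x y.

Definition clique_lt (n : nat) (e : rel 'I_n) (q : nat) : Prop :=
  forall S, is_clique e S -> #|S| < q.

(* G -v-> (2_r) : in every partition of V(G) into r parts (given as a map
   c : V -> 'I_r, parts may be empty) some part contains an edge *)
Definition varrow2 (n : nat) (e : rel 'I_n) (r : nat) : Prop :=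
  forall c : 'I_n -> 'I_r, exists x y, e x y /\ c x = c y.

Definition in_Hv (n : nat) (e : rel 'I_n) (r q : nat) : Prop :=
  simple_graph e /\ varrow2 e r /\ clique_lt e q.

Definition Fv_ge (r q N : nat) : Prop :=
  forall (n : nat) (e : rel 'I_n), in_Hv e r q -> N <= n.

Definition Fv_eq (r q N : nat) : Prop :=
  (exists e : rel 'I_N, in_Hv e r q) /\ Fv_ge r q N.

Definition ramsey_p3 (p n : nat) : Prop :=
  forall (N : nat) (e : rel 'I_N), n <= N -> simple_graph e ->
    (exists S, is_clique e S /\ #|S| = p) \/ (exists S, is_indep e S /\ #|S| = 3).

(* a < R(p,3) : a is smaller than every n with the Ramsey property
   (equivalently, than the least such n) *)
Definition lt_ramsey_p3 (a p : nat) : Prop :=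
  forall n, ramsey_p3 p n -> a < n.

(* Main.v *)
Require Import Defs.
From mathcomp Require Import all_boot.
From Stdlib Require Import Classical Lia.

Ltac nlia := rewrite -?plusE -?minusE -?multE; intros; lia.

Lemma a0 m k : 2*m-1 <= 0 -> k+3 <= m -> False.
Proof. move=> /leP h1 /leP h2; move: h1 h2; nlia. Qed.
Lemma a1 m r : 0 < m -> m-1 <= r -> r.+1 - m + (2*m-1) = r+m.
Proof. move=> /leP h1 /leP h2; move: h1 h2; nlia. Qed.
Lemma a2 t m N x : 2*m-1 <= N.+1 -> t <= x -> x < t + (2*m-1) -> x - t < N.+1.
Proof. move=> /leP h1 /leP h2 /leP h3; apply/leP; move: h1 h2 h3; nlia. Qed.
Lemma a3 t x y : t <= x -> t <= y -> x - t = y - t -> x = y.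
Proof. move=> /leP h1 /leP h2 h3; move: h1 h2 h3; nlia. Qed.
Lemma a4 t m r b cb ca : 0<m -> m-1<=r -> b <= 2*cb -> cb <= ca -> t + b = r+m ->
  t + ca = r -> t = r.+1 - m -> False.
Proof. move=> /leP h1 /leP h2 /leP h3 /leP h4 h5 h6 h7; move: h1 h2 h3 h4 h5 h6 h7; nlia. Qed.
Lemma a5 s1 s2 m k r : s1 <= r.+1 - m -> s2 < m-k -> m-1<=r -> k+3<=m -> s1+s2 < r-k+1.
Proof. move=> /leP h1 /leP h2 /leP h3 /leP h4; apply/leP; move: h1 h2 h3 h4; nlia. Qed.

Arguments a0 {m k}. Arguments a1 {m r}. Arguments a2 {t m N x}. Arguments a3 {t x y}.
Arguments a4 {t m r b cb ca}. Arguments a5 {s1 s2 m k r}.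

Lemma sub_card (T : finType) (A : {set T}) n :
  n <= #|A| -> exists B : {set T}, B \subset A /\ #|B| = n.
Proof.
case/card_geqP => s [us ss sA]; exists [set x in s]; split.
  by apply/subsetP => x; rewrite inE; exact: sA.
by rewrite cardsE; rewrite -ss; apply/card_uniqP.
Qed.

Arguments sub_card {T A n}.

Theorem lemma2p3 (m k : nat) :
  0 < m -> 0 < k -> k + 3 <= m ->
  lt_ramsey_p3 (2 * m - 1) (m - k) ->
  (forall r, m - 1 <= r -> Fv_ge r (r - k + 1) (r + m)) ->
  forall r, m - 1 <= r -> Fv_eq r (r - k + 1) (r + m).
Proof.
move=> m0 k0 km Hram Hge r Hr.
split; last exact: Hge.
have [N [e0 [HN [Hs [Hcl Hind]]]]] : exists N (e0 : rel 'I_N), 2*m-1 <= N /\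
   simple_graph e0 /\ ~ (exists S, is_clique e0 S /\ #|S| = m-k) /\
   ~ (exists S, is_indep e0 S /\ #|S| = 3).
  apply: NNPP => H.
  have: 2*m-1 < 2*m-1; last by rewrite ltnn.
  apply: Hram => N e0 HN Hs; apply: NNPP => H2; apply: H; exists N, e0.
  by do 2 split => //; split => Hc; apply: H2; [left|right].
case: N e0 HN Hs Hcl Hind => [|N] e0 HN [Hirr Hsym] Hcl Hind.
  by case: (a0 HN km).
set t := r.+1 - m.
have Ht : t + (2*m-1) = r + m.
  exact: a1.
pose f := fun x : 'I_(r+m) => (inord (x - t) : 'I_N.+1).
have fval : forall x : 'I_(r+m), t <= x -> val (f x) = x - t.
  move=> x tx; rewrite /f /= inordK //.
  apply: a2 HN tx _; rewrite Ht; exact: ltn_ord.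
have finj : forall x y : 'I_(r+m), t <= x -> t <= y -> f x = f y -> x = y.
  move=> x y tx ty fxy; apply: val_inj.
  have := congr1 val fxy; rewrite (fval _ tx) (fval _ ty).
  exact: a3.
pose E := fun x y : 'I_(r+m) => (x != y) && [|| x < t, y < t | e0 (f x) (f y)].
pose A := [set x : 'I_(r+m) | x < t].
have tle : t <= r + m by rewrite -Ht leq_addr.
have cardA : #|A| = t.
  have -> : A = [set widen_ord tle i | i in 'I_t].
    apply/setP => x; rewrite inE; apply/idP/imsetP.
      by move=> xt; exists (Ordinal xt) => //; apply: val_inj.
    by case=> i _ ->; rewrite /= ltn_ord.
  rewrite card_imset ?card_ord //.
  by move=> i j /(congr1 val) /= h; apply: val_inj.
have inB : forall x, (x \in ~: A) = (t <= x) by move=> x; rewrite !inE -leqNgt.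
exists E; split; [|split].
- split; first by move=> x; rewrite /E eqxx.
  move=> x y; rewrite /E eq_sym orbCA (Hsym (f x)) //.
- move=> c; apply: NNPP => Hno.
  have Hc : forall x y, E x y -> c x != c y.
    by move=> x y Exy; apply/eqP => cxy; apply: Hno; exists x, y.
  set B := ~: A.
  have cAinj : {in A &, injective c}.
    move=> x y xA yA cxy; apply/eqP; apply: contraT => nxy.
    have xt : x < t by move: xA; rewrite inE.
    by move: (Hc x y); rewrite /E nxy xt cxy eqxx => /(_ isT).
  have cAB : [set c x | x in B] \subset ~: [set c x | x in A].
    apply/subsetP => j /imsetP [y yB ->]; rewrite inE; apply/imsetP => [[x xA cxy]].
    have xt : x < t by move: xA; rewrite inE.
    have yt : t <= y by rewrite -inB.
    have nxy : x != y by apply: contraTneq xt => ->; rewrite -leqNgt.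
    by move: (Hc x y); rewrite /E nxy xt cxy eqxx => /(_ isT).
  have fib : forall j, \sum_(i in B | c i == j) 1 <= 2.
    move=> j; rewrite sum1_card; rewrite leqNgt; apply/negP => h3.
    have h3' : 3 <= #|[set i in B | c i == j]| by rewrite cardsE.
    have [S [SF S3]] := sub_card h3'.
    have SB : forall x, x \in S -> x \in B /\ c x = j.
      by move=> x /(subsetP SF); rewrite inE => /andP [-> /eqP].
    apply: Hind; exists [set f x | x in S]; split.
      move=> a b /imsetP [x xS ->] /imsetP [y yS ->].
      case: (eqVneq x y) => [->|nxy]; first by rewrite Hirr.
      have [xB cx] := SB x xS; have [yB cy] := SB y yS.
      apply/negP => ef; move: (Hc x y); rewrite /E nxy ef !orbT cx cy eqxx.
      by move=> /(_ isT).
    rewrite card_in_imset // => x y xS yS; apply: finj.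
      by rewrite -inB; case: (SB x xS).
    by rewrite -inB; case: (SB y yS).
  have cardB : #|B| <= 2 * #|[set c x | x in B]|.
    rewrite -sum1_card (partition_big_imset c).
    apply: (@leq_trans (\sum_(j in [set c x | x in B]) 2)).
      by apply: leq_sum => j _; exact: fib.
    by rewrite sum_nat_const mulnC.
  have cAB' := subset_leq_card cAB.
  have cc := cardsC A; rewrite card_ord in cc.
  have cc2 := cardsC [set c x | x in A]; rewrite card_ord card_in_imset // in cc2.
  rewrite cardA in cc cc2.
  exact: (a4 m0 Hr cardB cAB' cc cc2).
- move=> S HS.
  have h1 : #|S :&: A| <= t by rewrite -cardA subset_leq_card // subsetIr.
  have h2 : #|S :\: A| < m - k.
    rewrite ltnNge; apply/negP => hm.
    have [S' [S'sub S'c]] := sub_card hm.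
    have S'B : forall x, x \in S' -> x \in S /\ t <= x.
      by move=> x /(subsetP S'sub); rewrite !inE -leqNgt => /andP [-> ->].
    apply: Hcl; exists [set f x | x in S']; split.
      move=> a b /imsetP [x xS ->] /imsetP [y yS ->] nab.
      have nxy : x != y by apply: contraNneq nab => ->.
      have [xS0 tx] := S'B x xS; have [yS0 ty] := S'B y yS.
      move: (HS x y xS0 yS0 nxy); rewrite /E nxy /=.
      by rewrite ltnNge tx ltnNge ty.
    rewrite card_in_imset // => x y xS yS; apply: finj.
      by case: (S'B x xS).
    by case: (S'B y yS).
  rewrite -(cardsID A S).
  exact: a5 h1 h2 Hr km.
Qed.
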